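(* Let $G=(V,E)$ be a finite simple graph with $V=\{1,\dots,n\}$ and real vertex weights $w_1,\dots,w_n$, and let $d\ge 1$. Suppose $\psi, v_1,\dots,v_n\in\mathbb{C}^d$ are complex unit vectors with $\langle v_i|v_j\rangle=0$ whenever $\{i,j\}\in E$, forming a Lovász-optimum orthogonal representation, i.e. $\sum_{j\in V} w_j|\langle\psi|v_j\rangle|^2=\vartheta_c(G)$. Then there exist real unit vectors $\phi,\omega_1,\dots,\omega_n\in\mathbb{R}^{2d-1}$ with $\langle \omega_i|\omega_j\rangle=0$ whenever $\{i,j\}\in E$ and $$\sum_{j\in V} w_j\,\langle \phi|\omega_j\rangle^2=\sum_{j\in V} w_j\,|\langle \psi|v_j\rangle|^2 = \vartheta_c(G);$$ that is, a Lovász-optimum orthogonal representation can be realized in the $(2d-1)$-dimensional real Hilbert space.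
   Context: For the weighted graph $G$, $\vartheta_c(G)=\sup \sum_{j\in V} w_j\,|\langle \psi|v_j\rangle|^2$, where the supremum runs over all dimensions $m\ge1$ and all complex unit vectors $\psi,v_1,\dots,v_n\in\mathbb{C}^m$ such that $\langle v_i|v_j\rangle=0$ whenever $\{i,j\}\in E$. A Lovász-optimum orthogonal representation (LOOR) is a choice of unit vectors $\psi, v_1,\dots,v_n$ (real or complex) satisfying these orthogonality constraints and attaining this supremum. *)

(* Defs.v *)
From HB Require Import structures.
From mathcomp Require Import all_boot all_order all_algebra.
From mathcomp Require Import complex.
From mathcomp Require Import boolp classical_sets reals.
Set Implicit Arguments. Unset Strict Implicit. Unset Printing Implicit Defensive.
Import Order.TTheory GRing.Theory Num.Theory.
Local Open Scope ring_scope.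

Definition cinner (R : realType) (m : nat) (u v : 'I_m -> R[i]) : R[i] :=
  \sum_(k < m) (complex.conjc (u k)) * v k.

Definition csqnorm (R : realType) (z : R[i]) : R :=
  (complex.Re z) ^+ 2 + (complex.Im z) ^+ 2.

Definition rinner (R : realType) (m : nat) (u v : 'I_m -> R) : R :=
  \sum_(k < m) u k * v k.

Definition cvalue (R : realType) (n m : nat) (w : 'I_n -> R)
  (psi : 'I_m -> R[i]) (v : 'I_n -> 'I_m -> R[i]) : R :=
  \sum_(j < n) w j * csqnorm (cinner psi (v j)).

Definition is_cOR (R : realType) (n m : nat) (e : rel 'I_n)
  (psi : 'I_m -> R[i]) (v : 'I_n -> 'I_m -> R[i]) : Prop :=
  cinner psi psi = 1 /\ (forall j, cinner (v j) (v j) = 1) /\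
  (forall i j, e i j -> cinner (v i) (v j) = 0).

Local Open Scope classical_set_scope.
Definition theta_c (R : realType) (n : nat) (e : rel 'I_n) (w : 'I_n -> R) : R :=
  reals.sup [set x : R | exists (m : nat) (psi : 'I_m -> R[i])
                           (v : 'I_n -> 'I_m -> R[i]),
      (0 < m)%N /\ is_cOR e psi v /\ x = cvalue w psi v].

(* Main.v *)
Require Import Defs.
From HB Require Import structures.
From mathcomp Require Import all_boot all_order all_algebra.
From mathcomp Require Import complex.
From mathcomp Require Import boolp classical_sets reals.
From mathcomp Require Import ring lra.
Import Order.TTheory GRing.Theory Num.Theory.
Local Open Scope ring_scope.
Set Implicit Arguments. Unset Strict Implicit.

Local Notation Re := complex.Re.
Local Notation Im := complex.Im.
Section Aux.
Variable R : realType.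
Implicit Types x y z : R[i].

Lemma cext x y : Re x = Re y -> Im x = Im y -> x = y.
Proof. case: x => a b; case: y => c d /= h1 h2; by rewrite h1 h2. Qed.
Lemma ReM x y : Re (x * y) = Re x * Re y - Im x * Im y.
Proof. by case: x => a b; case: y => c d. Qed.
Lemma ImM x y : Im (x * y) = Re x * Im y + Im x * Re y.
Proof. by case: x => a b; case: y => c d. Qed.
Lemma ReD x y : Re (x + y) = Re x + Re y.
Proof. by case: x => a b; case: y => c d. Qed.
Lemma ImD x y : Im (x + y) = Im x + Im y.
Proof. by case: x => a b; case: y => c d. Qed.
Lemma ReJ x : Re (conjc x) = Re x. Proof. by case: x. Qed.
Lemma ImJ x : Im (conjc x) = - Im x. Proof. by case: x. Qed.
Lemma Re0 : Re (0 : R[i]) = 0. Proof. by []. Qed.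
Lemma Im0 : Im (0 : R[i]) = 0. Proof. by []. Qed.
Lemma Re1 : Re (1 : R[i]) = 1. Proof. by []. Qed.
Lemma Im1 : Im (1 : R[i]) = 0. Proof. by []. Qed.

Lemma Re_sum m (F : 'I_m -> R[i]) : Re (\sum_(k < m) F k) = \sum_(k < m) Re (F k).
Proof. exact: (big_morph _ ReD Re0). Qed.
Lemma Im_sum m (F : 'I_m -> R[i]) : Im (\sum_(k < m) F k) = \sum_(k < m) Im (F k).
Proof. exact: (big_morph _ ImD Im0). Qed.

Lemma conjM x y : conjc (x * y) = conjc x * conjc y.
Proof. apply: cext; rewrite !(ReM, ImM, ReJ, ImJ); ring. Qed.

Definition sc {m} (c : R[i]) (u : 'I_m -> R[i]) := fun k => c * u k.

Lemma cinner_scl m c (u v : 'I_m -> R[i]) : cinner (sc c u) v = conjc c * cinner u v.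
Proof. rewrite /cinner mulr_sumr; apply: eq_bigr => k _; rewrite /sc conjM; ring. Qed.
Lemma cinner_scr m c (u v : 'I_m -> R[i]) : cinner u (sc c v) = c * cinner u v.
Proof. rewrite /cinner mulr_sumr; apply: eq_bigr => k _; rewrite /sc; ring. Qed.

Lemma csqnormE x : csqnorm x = Re (conjc x * x).
Proof. rewrite /csqnorm ReM ReJ ImJ; ring. Qed.
Lemma csqnormM x y : csqnorm (x * y) = csqnorm x * csqnorm y.
Proof. rewrite /csqnorm !(ReM, ImM); ring. Qed.

Lemma ReiJ x : Re (conjc 'i%C * x) = Im x.
Proof. rewrite ReM ReJ ImJ /=; ring. Qed.
Lemma iJi : conjc 'i%C * 'i%C = 1 :> R[i].
Proof. apply: cext; rewrite ?ReM ?ImM ?ReJ ?ImJ /=; ring. Qed.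

Definition theta (z : R[i]) : R[i] :=
  let q := Re z ^+ 2 + Im z ^+ 2 in
  if q == 0 then 1 else (Re z / Num.sqrt q +i* (- Im z / Num.sqrt q))%C.

Lemma thetaJ z : conjc (theta z) * theta z = 1.
Proof.
rewrite /theta; case: eqP => hq; first by rewrite conjc1 mulr1.
have q0 : 0 <= Re z ^+ 2 + Im z ^+ 2 by rewrite addr_ge0 ?sqr_ge0.
have hs := sqr_sqrtr q0.
have sn : Num.sqrt (Re z ^+ 2 + Im z ^+ 2) != 0.
  by rewrite sqrtr_eq0 -ltNge lt_def q0 andbT; apply/eqP.
apply: cext; rewrite ?ReM ?ImM ?ReJ ?ImJ /=; last by ring.
set s := Num.sqrt _ in hs sn *.
transitivity ((Re z ^+ 2 + Im z ^+ 2) / s ^+ 2); first by field.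
by rewrite hs divff //; apply/eqP.
Qed.

Lemma thetaIm z : Im (theta z * z) = 0.
Proof.
rewrite /theta ImM; case: eqP => hq /=; last by ring.
have : Im z ^+ 2 = 0.
  apply/eqP; rewrite eq_le sqr_ge0 andbT; rewrite -hq lerDr sqr_ge0 //.
by move/eqP; rewrite sqrf_eq0 => /eqP ->; ring.
Qed.

Lemma thetaRe z : (Re (theta z * z)) ^+ 2 = csqnorm z.
Proof.
have : csqnorm (theta z * z) = csqnorm z.
  by rewrite csqnormM [csqnorm (theta z)]csqnormE thetaJ Re1 mul1r.
by rewrite /csqnorm thetaIm expr0n /= addr0.
Qed.
End Aux.
Section Real.
Variable R : realType.

Lemma rinner_sym m (x y : 'I_m -> R) : rinner x y = rinner y x.
Proof. by apply: eq_bigr => k _; rewrite mulrC. Qed.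

Lemma rinner_lin m (x y a : 'I_m -> R) s :
  rinner (fun k => x k - s * a k) y = rinner x y - s * rinner a y.
Proof.
rewrite /rinner mulr_sumr -sumrN -big_split /=; apply: eq_bigr => k _; ring.
Qed.

Lemma rinner_bil m (x y a : 'I_m -> R) s t :
  rinner (fun k => x k - s * a k) (fun k => y k - t * a k) =
  rinner x y - t * rinner x a - s * rinner a y + s * t * rinner a a.
Proof.
rewrite rinner_lin [rinner x _]rinner_sym [rinner a _]rinner_sym !rinner_lin.
rewrite (rinner_sym y x) (rinner_sym y a) (rinner_sym a x); ring.
Qed.

Definition eb M : 'I_M.+1 -> R := fun k => (k == ord_max)%:R.

Lemma rinner_eb M (x : 'I_M.+1 -> R) : rinner (@eb M) x = x ord_max.
Proof.
rewrite /rinner (bigD1 ord_max) //= /eb eqxx mul1r big1 ?addr0 //.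
by move=> k /negPf ->; rewrite mul0r.
Qed.

Lemma reduce M (u : 'I_M.+1 -> R) : rinner u u = 1 ->
  exists T : ('I_M.+1 -> R) -> 'I_M -> R, forall x y,
    rinner u x = 0 -> rinner u y = 0 -> rinner (T x) (T y) = rinner x y.
Proof.
move=> hu.
pose a := fun k => u k - 1 * @eb M k.
pose c := 2 / rinner a a.
pose H (x : 'I_M.+1 -> R) := fun k => x k - (c * rinner a x) * a k.
have Hiso x y : rinner (H x) (H y) = rinner x y.
  rewrite /H rinner_bil (rinner_sym x a).
  case: (eqVneq (rinner a a) 0) => h.
    by rewrite /c h invr0 mulr0 !mul0r; ring.
  have hc : c * rinner a a = 2 by rewrite /c -mulrA mulVf // mulr1.
  transitivity (rinner x y - 2 * c * rinner a x * rinner a y +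
     c * rinner a x * rinner a y * (c * rinner a a)); first by ring.
  rewrite hc; ring.
have Hlast x : rinner u x = 0 -> H x ord_max = 0.
  move=> hx.
  have hax : rinner a x = - x ord_max by rewrite /a rinner_lin hx rinner_eb; ring.
  have haa : rinner a a = 2 - 2 * u ord_max.
    rewrite /a rinner_bil hu rinner_eb (rinner_sym u) rinner_eb.
    rewrite rinner_eb /eb eqxx /=; ring.
  case: (eqVneq (rinner a a) 0) => h.
    have a0 : forall k, a k = 0.
      move=> k; have := @psumr_eq0P _ _ xpredT (fun i => a i * a i)
        (fun i _ => (ltac:(by rewrite -expr2 sqr_ge0) : 0 <= a i * a i)) h k isT.
      move=> /eqP.
      by rewrite mulf_eq0 orbb => /eqP.
    have ax0 : rinner a x = 0 by rewrite /rinner big1 // => k _; rewrite a0 mul0r.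
    by rewrite /H ax0 mulr0 mul0r subr0; move: hax; rewrite ax0 => /eqP;
       rewrite eq_sym oppr_eq0 => /eqP.
  have hc : c * rinner a a = 2 by rewrite /c -mulrA mulVf // mulr1.
  rewrite haa in hc.
  rewrite /H hax /a /eb eqxx /=.
  transitivity (x ord_max * (2 - c * (2 - 2 * u ord_max)) / 2); first by field.
  by rewrite hc subrr mulr0 mul0r.
exists (fun x k => H x (widen_ord (leqnSn M) k)).
move=> x y hx hy.
by rewrite -Hiso /rinner [in RHS]big_ord_recr /= Hlast // mul0r addr0.
Qed.
End Real.
Section Realif.
Variable R : realType.
Variables (d' M : nat).
Hypothesis hM : M.+1 = (d'.+1 + d'.+1)%N.

Definition rf (x : 'I_d'.+1 -> R[i]) : 'I_M.+1 -> R := fun k =>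
  if (k < d'.+1)%N then Re (x (inord k)) else Im (x (inord (k - d'.+1))).

Lemma rinner_rf x y : rinner (rf x) (rf y) = Re (cinner x y).
Proof.
pose G (n : nat) := (if (n < d'.+1)%N then Re (x (inord n)) else Im (x (inord (n - d'.+1)))) *
   (if (n < d'.+1)%N then Re (y (inord n)) else Im (y (inord (n - d'.+1)))).
have -> : rinner (rf x) (rf y) = \sum_(k < M.+1) G k by [].
rewrite -(big_mkord xpredT) hM (@big_cat_nat _ _ _ d'.+1) //; last by rewrite leq_addl /=.
have -> : \sum_(d'.+1 <= i < d'.+1 + d'.+1) G i = \sum_(0 <= i < d'.+1) G (i + d'.+1).
  by rewrite -{1}[d'.+1]add0n big_addn addnK.
rewrite !big_mkord /rinner /cinner Re_sum.
change (\sum_(i < d'.+1) G i + \sum_(i < d'.+1) G (i + d'.+1)%N = \sum_(k < d'.+1) Re (conjc (x k) * y k)).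
rewrite -big_split /=.
apply: eq_bigr => i _; rewrite /G ltn_ord ltnNge leq_addl /= addnK inord_val.
rewrite ReM ReJ ImJ; ring.
Qed.
End Realif.
Lemma main_gen (R : realType) n (e : rel 'I_n) (w : 'I_n -> R) d' M
  (hM : M.+1 = (d'.+1 + d'.+1)%N) (psi : 'I_d'.+1 -> R[i])
  (v : 'I_n -> 'I_d'.+1 -> R[i]) (hOR : is_cOR e psi v) :
  exists (phi : 'I_M -> R) (om : 'I_n -> 'I_M -> R),
    rinner phi phi = 1 /\ (forall j, rinner (om j) (om j) = 1) /\
    (forall i j, e i j -> rinner (om i) (om j) = 0) /\
    \sum_(j < n) w j * (rinner phi (om j)) ^+ 2 = cvalue w psi v.
Proof.
case: hOR => hpsi [hv he].
pose z j := cinner psi (v j).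
pose V j := sc (theta (z j)) (v j).
pose U := sc 'i%C psi.
pose r := @rf R d' M.
have hu : rinner (r U) (r U) = 1.
  by rewrite (rinner_rf hM) cinner_scl cinner_scr hpsi mulr1 iJi.
have [T hT] := reduce hu.
have hUphi : rinner (r U) (r psi) = 0.
  by rewrite (rinner_rf hM) cinner_scl hpsi mulr1.
have hUV j : rinner (r U) (r (V j)) = 0.
  by rewrite (rinner_rf hM) cinner_scl cinner_scr ReiJ thetaIm.
exists (T (r psi)), (fun j => T (r (V j))).
split; first by rewrite hT // (rinner_rf hM) hpsi.
split; first by move=> j; rewrite hT // (rinner_rf hM) cinner_scl cinner_scr hv mulr1 thetaJ.
split; first by move=> i j hij; rewrite hT // (rinner_rf hM) cinner_scl cinner_scr he // !mulr0.
apply: eq_bigr => j _; rewrite hT // (rinner_rf hM) cinner_scr thetaRe.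
by [].
Qed.

Theorem mainTheorem2 (R : realType) (n : nat) (e : rel 'I_n)
  (e_sym : symmetric e) (e_irr : irreflexive e) (w : 'I_n -> R) (d : nat)
  (d_pos : (0 < d)%N) (psi : 'I_d -> R[i]) (v : 'I_n -> 'I_d -> R[i])
  (hOR : is_cOR e psi v) (hopt : cvalue w psi v = theta_c e w) :
  exists (phi : 'I_(2 * d - 1) -> R) (om : 'I_n -> 'I_(2 * d - 1) -> R),
    rinner phi phi = 1 /\ (forall j, rinner (om j) (om j) = 1) /\
    (forall i j, e i j -> rinner (om i) (om j) = 0) /\
    \sum_(j < n) w j * (rinner phi (om j)) ^+ 2 = cvalue w psi v /\
    cvalue w psi v = theta_c e w.
Proof.
case: d d_pos psi v hOR hopt => [//|d'] _ psi v hOR hopt.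
have hM : (2 * d'.+1 - 1).+1 = (d'.+1 + d'.+1)%N.
  by rewrite addnn -mul2n mulnS addSn /= subn1 /=.
have [phi [om [h1 [h2 [h3 h4]]]]] := main_gen w hM hOR.
by exists phi, om.
Qed.
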